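(* Let $\theta\in(0,\pi/2)$. For a qubit operator write $\rho=\tfrac12(\mathbb{1}+x\hat X+z\hat Z)$ with Pauli operators $\hat X,\hat Z$. Consider the pure states $|\psi\rangle\langle\psi|$, $|\bar\psi\rangle\langle\bar\psi|$, $|\phi\rangle\langle\phi|$, $|\bar\phi\rangle\langle\bar\phi|$ with Bloch vectors $(x,z)=(\sin\theta,\cos\theta)$, $(-\sin\theta,-\cos\theta)$, $(\sin\theta,-\cos\theta)$, $(-\sin\theta,\cos\theta)$ respectively, and the three binary measurements $M_\psi=\{|\psi\rangle\langle\psi|,|\bar\psi\rangle\langle\bar\psi|\}$, $M_\phi=\{|\phi\rangle\langle\phi|,|\bar\phi\rangle\langle\bar\phi|\}$, $M_g=\{E_{g_\psi},E_{g_\phi}\}$ with $E_{g_\psi}=|0\rangle\langle0|$, $E_{g_\phi}=|1\rangle\langle1|$ ($Z$ basis). For $r\in[0,1]$, replace every effect $E$ by $\mathcal{D}^{\mathrm{deph}}_r(E):=(1-r)E+r\sum_{i\in\{0,1\}}\langle i|E|i\rangle\,|i\rangle\langle i|$, keeping the four states unchanged. Then the minimal $r$ for which the resulting prepare-and-measure scenario admits a noncontextual ontological model is $$r^{\mathrm{deph}}_{\min}=1-\frac{1-\cos\theta}{\sin^2\theta}.$$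
   Context: A noncontextual ontological model for a quantum prepare-and-measure scenario consisting of a finite set $\mathcal{S}$ of density operators and a finite set $\mathcal{E}$ of effects (the elements of finitely many POVMs) is: a finite set $\Lambda$; a map $\rho\mapsto\mu_\rho$ from the convex hull of $\mathcal{S}$ to probability distributions on $\Lambda$ that is convex-linear; and a map $E\mapsto\xi_E$ from the convex hull of $\mathcal{E}\cup\{0,\mathbb{1}\}$ to functions $\Lambda\to[0,1]$ that is convex-linear with $\xi_{\mathbb{1}}\equiv1$; such that $\mathrm{Tr}(E\rho)=\sum_{\lambda}\xi_E(\lambda)\mu_\rho(\lambda)$ for all $\rho\in\mathcal{S}$, $E\in\mathcal{E}$. Convex-linearity encodes noncontextuality: operationally equivalent (equal-operator) mixtures receive identical ontological representations. *)

(* Defs.v *)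
From HB Require Import structures.
From mathcomp Require Import all_boot all_order all_algebra.
From mathcomp Require Import all_classical all_reals all_analysis.
Set Implicit Arguments. Unset Strict Implicit. Unset Printing Implicit Defensive.
Import Order.TTheory GRing.Theory Num.Theory.
Local Open Scope ring_scope.

Section Defs.
Variable R : realType.

(* Qubit operators: all operators of the scenario are real combinations of
   1, X, Z, hence real symmetric 2x2 matrices in the computational basis. *)
Definition pauliX : 'M[R]_2 := \matrix_(i < 2, j < 2) (if i == j then 0 else 1).
Definition pauliZ : 'M[R]_2 :=
  \matrix_(i < 2, j < 2) (if i == j then (if i == 0 :> nat then 1 else -1) else 0).

Definition bloch (x z : R) : 'M[R]_2 :=
  2^-1 *: (1%:M + x *: pauliX + z *: pauliZ).

Definition psi (t : R) := bloch (sin t) (cos t).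
Definition psibar (t : R) := bloch (- sin t) (- cos t).
Definition phi (t : R) := bloch (sin t) (- cos t).
Definition phibar (t : R) := bloch (- sin t) (cos t).
Definition ketbra (i : 'I_2) : 'M[R]_2 := delta_mx i i.

Definition deph (r : R) (E : 'M[R]_2) : 'M[R]_2 :=
  (1 - r) *: E + r *: \sum_(i < 2) E i i *: ketbra i.

Definition in_hull (s : seq 'M[R]_2) (A : 'M[R]_2) : Prop :=
  exists w : 'I_(size s) -> R,
    (forall i, 0 <= w i) /\ \sum_i w i = 1 /\ A = \sum_i w i *: s`_i.

Definition convex_linear_on (n : nat) (P : 'M[R]_2 -> Prop)
  (f : 'M[R]_2 -> 'I_n -> R) : Prop :=
  forall A B (t : R), P A -> P B -> 0 <= t <= 1 ->
    forall l, f (t *: A + (1 - t) *: B) l = t * f A l + (1 - t) * f B l.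

(* Noncontextual ontological model for states S and effects E, with a finite
   ontic state space Lambda = 'I_n. *)
Definition NC_model (S E : seq 'M[R]_2) : Prop :=
  exists (n : nat) (mu xi : 'M[R]_2 -> 'I_n -> R),
    (forall rho, in_hull S rho -> (forall l, 0 <= mu rho l) /\ \sum_l mu rho l = 1)
    /\ convex_linear_on (in_hull S) mu
    /\ (forall e, in_hull (0 :: 1%:M :: E) e -> forall l, 0 <= xi e l <= 1)
    /\ convex_linear_on (in_hull (0 :: 1%:M :: E)) xi
    /\ (forall l, xi 1%:M l = 1)
    /\ (forall rho e, rho \in S -> e \in E ->
          \tr (e *m rho) = \sum_l xi e l * mu rho l).

Definition states (t : R) : seq 'M[R]_2 := [:: psi t; psibar t; phi t; phibar t].

Definition effects (t r : R) : seq 'M[R]_2 :=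
  map (deph r) [:: psi t; psibar t; phi t; phibar t; ketbra 0; ketbra 1].

Definition admits_NC (t r : R) : Prop := NC_model (states t) (effects t r).

End Defs.

(* Main.v *)
Require Import Defs.
From HB Require Import structures.
From mathcomp Require Import all_boot all_order all_algebra.
From mathcomp Require Import all_classical all_reals all_analysis.
From mathcomp Require Import ring lra.
Import Order.TTheory GRing.Theory Num.Theory.
Local Open Scope ring_scope.
Set Implicit Arguments. Unset Strict Implicit. Unset Printing Implicit Defensive.

Section Aux.
Variable R : realType.
Local Notation M := ('M[R]_2).

Definition o1 : 'I_2 := lift ord0 ord0.

Definition lf (a b c d : R) (A : M) : R :=
  a * A ord0 ord0 + b * A ord0 o1 + c * A o1 ord0 + d * A o1 o1.

Lemma lf_lin a b c d (A B : M) (x : R) :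
  lf a b c d (x *: A + (1 - x) *: B) = x * lf a b c d A + (1 - x) * lf a b c d B.
Proof. rewrite /lf !mxE; ring. Qed.

Lemma lf_sum a b c d n (w : 'I_n -> R) (F : 'I_n -> M) :
  lf a b c d (\sum_i w i *: F i) = \sum_i w i * lf a b c d (F i).
Proof.
rewrite /lf !summxE !mulr_sumr -!big_split /=; apply: eq_bigr => i _; rewrite !mxE; ring.
Qed.

Lemma lf_hull_ge s (A : M) a b c d lo :
  in_hull s A -> (forall i : 'I_(size s), lo <= lf a b c d s`_i) -> lo <= lf a b c d A.
Proof.
case=> w [w0 [w1 ->]] h; rewrite lf_sum.
have -> : lo = \sum_i w i * lo by rewrite -mulr_suml w1 mul1r.
by apply: ler_sum => i _; apply: ler_wpM2l.
Qed.

Lemma lf_hull_le s (A : M) a b c d hi :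
  in_hull s A -> (forall i : 'I_(size s), lf a b c d s`_i <= hi) -> lf a b c d A <= hi.
Proof.
case=> w [w0 [w1 ->]] h; rewrite lf_sum.
have -> : hi = \sum_i w i * hi by rewrite -mulr_suml w1 mul1r.
by apply: ler_sum => i _; apply: ler_wpM2l.
Qed.

Lemma in_hull_nth (s : seq M) j : (j < size s)%N -> in_hull s s`_j.
Proof.
move=> hj; exists (fun i => (val i == j)%:R); split; first by move=> i; exact: ler0n.
split.
  rewrite (bigD1 (Ordinal hj)) //= eqxx big1 ?addr0 // => i.
  by rewrite -val_eqE /= => /negbTE ->.
rewrite (bigD1 (Ordinal hj)) //= eqxx scale1r big1 ?addr0 // => i.
by rewrite -val_eqE /= => /negbTE ->; rewrite scale0r.
Qed.

Definition pick4 (l : 'I_4) (x0 x1 x2 x3 : R) : R :=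
  match nat_of_ord l with 0 => x0 | 1 => x1 | 2 => x2 | _ => x3 end.

Definition muM (s c k : R) (rho : M) (l : 'I_4) : R :=
  lf (pick4 l (k * s ^+ 2 / 2) (k * s ^+ 2 / 2) ((c + 1) / 2) ((c - 1) / 2))
     (pick4 l (k * s / 2) (- (k * s / 2)) 0 0)
     (pick4 l (k * s / 2) (- (k * s / 2)) 0 0)
     (pick4 l (k * s ^+ 2 / 2) (k * s ^+ 2 / 2) ((c - 1) / 2) ((c + 1) / 2)) rho.

Definition xiM (m : R) (E : M) (l : 'I_4) : R :=
  lf (pick4 l (1 / 2) (1 / 2) 1 0)
     (pick4 l (m / 2) (- (m / 2)) 0 0)
     (pick4 l (m / 2) (- (m / 2)) 0 0)
     (pick4 l (1 / 2) (1 / 2) 0 1) E.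

Lemma trE (A B : M) : \tr (A *m B) = A ord0 ord0 * B ord0 ord0 + A ord0 o1 * B o1 ord0
  + A o1 ord0 * B ord0 o1 + A o1 o1 * B o1 o1.
Proof. rewrite /mxtrace !big_ord_recl !big_ord0 !mxE !big_ord_recl !big_ord0 /o1 /=; ring. Qed.

Lemma repro (s c k : R) (E rho : M) : k != 0 -> s != 0 -> c = 1 - k * s ^+ 2 ->
  E ord0 o1 = E o1 ord0 -> rho ord0 o1 = rho o1 ord0 ->
  \tr (E *m rho) = \sum_l xiM ((k * s)^-1) E l * muM s c k rho l.
Proof.
move=> hk hs hc hE hr.
rewrite trE !big_ord_recl big_ord0 /xiM /muM /lf /pick4 /= hc hE hr.
move: (E ord0 ord0) (E o1 ord0) (E o1 o1) (rho ord0 ord0) (rho o1 ord0) (rho o1 o1) => e1 e2 e3 r1 r2 r3.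
by field; rewrite hk hs.
Qed.

Lemma musum (s c k : R) (rho : M) : c = 1 - k * s ^+ 2 ->
  \sum_l muM s c k rho l = lf 1 0 0 1 rho.
Proof. move=> hc; rewrite !big_ord_recl big_ord0 /muM /lf /pick4 /= hc; by field. Qed.

End Aux.

Section Model.
Variable R : realType.
Local Notation M := ('M[R]_2).

Ltac unf := unfold deph, psi, psibar, phi, phibar, bloch, pauliX, pauliZ, ketbra, lf, o1;
  rewrite ?summxE ?mxE /= ?big_ord_recl ?big_ord0 ?mxE /= ?mulr1n ?mulr0n.

Lemma lf_bloch (a b c d : R) (x z : R) :
  lf a b c d (bloch x z) = (a * (1 + z) + (b + c) * x + d * (1 - z)) / 2.
Proof. unf; by field. Qed.
Lemma lf_dbloch (a b c d : R) (r x z : R) :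
  lf a b c d (deph r (bloch x z)) = (a * (1 + z) + (b + c) * (1 - r) * x + d * (1 - z)) / 2.
Proof. unf; by field. Qed.
Lemma lf_dk0 (a b c d : R) (r : R) : lf a b c d (deph r (ketbra R 0)) = a.
Proof. unf; by field. Qed.
Lemma lf_dk1 (a b c d : R) (r : R) : lf a b c d (deph r (ketbra R 1)) = d.
Proof. unf; by field. Qed.
Lemma lf_0 (a b c d : R) : lf a b c d (0 : M) = 0.
Proof. unf; by field. Qed.
Lemma lf_1 (a b c d : R) : lf a b c d (1%:M : M) = a + d.
Proof. unf; by field. Qed.

Lemma sym_bloch (x z : R) : bloch x z ord0 o1 = bloch x z o1 ord0.
Proof. unf; ring. Qed.
Lemma sym_ket i : ketbra R i ord0 o1 = ketbra R i o1 ord0.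
Proof. by rewrite /ketbra /o1 !mxE; case: i => [[|[|//]] ?]. Qed.
Lemma sym_deph (r : R) (A : M) : A ord0 o1 = A o1 ord0 -> deph r A ord0 o1 = deph r A o1 ord0.
Proof.
move=> h; rewrite /o1 in h.
rewrite /deph /ketbra /o1 !mxE !summxE !big_ord_recl !big_ord0 !mxE /= h; ring.
Qed.

Ltac lfs := rewrite /= /psi /psibar /phi /phibar ?lf_dbloch ?lf_bloch ?lf_dk0 ?lf_dk1 ?lf_0 ?lf_1.

Lemma model (t k m : R) : 0 < sin t -> 0 <= cos t <= 1 -> 0 < k ->
  k * sin t ^+ 2 = 1 - cos t -> m * (k * sin t) = 1 -> admits_NC t (1 - k).
Proof.
move=> hs hc hk hks hm.
have hk0 : k != 0 by rewrite gt_eqF.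
have hs0 : sin t != 0 by rewrite gt_eqF.
have hc' : cos t = 1 - k * sin t ^+ 2 by lra.
have hks2 : 0 <= k * sin t ^+ 2 by lra.
have hmeq : m = (k * sin t)^-1.
  by apply: (mulIf (mulf_neq0 hk0 hs0)); rewrite hm mulVf // mulf_neq0.
exists 4%N, (muM (sin t) (cos t) k), (xiM m).
split.
  move=> rho hrho; split.
    move=> l; apply: (lf_hull_ge hrho).
    by case: l => [[|[|[|[|//]]]] ?]; case=> [[|[|[|[|//]]]] ?]; rewrite /muM /xiM /pick4; lfs; lra.
  rewrite musum //; apply/eqP; rewrite eq_le; apply/andP; split;
    [apply: (lf_hull_le hrho) | apply: (lf_hull_ge hrho)];
    by case=> [[|[|[|[|//]]]] ?]; lfs; lra.
split; first by move=> A B x _ _ _ l; rewrite /muM lf_lin.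
split.
  move=> e he l; apply/andP; split; [apply: (lf_hull_ge he) | apply: (lf_hull_le he)];
  by case: l => [[|[|[|[|//]]]] ?]; case=> [[|[|[|[|[|[|[|[|//]]]]]]]] ?]; rewrite /muM /xiM /pick4; lfs; lra.
split; first by move=> A B x _ _ _ l; rewrite /xiM lf_lin.
split.
  by case=> [[|[|[|[|//]]]] ?]; rewrite /xiM /pick4; lfs; lra.
have symS : all (fun A : M => A ord0 o1 == A o1 ord0) (states t).
  rewrite /states /=; repeat (apply/andP; split); try done; apply/eqP; exact: sym_bloch.
have symE : all (fun A : M => A ord0 o1 == A o1 ord0) (effects t (1 - k)).
  rewrite /effects /=; repeat (apply/andP; split); try done; apply/eqP; apply: sym_deph;
    first [exact: sym_bloch | exact: sym_ket].
move=> rho e /(allP symS)/eqP h1 /(allP symE)/eqP h2.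
by rewrite hmeq; apply: repro.
Qed.

End Model.

Section Lower.
Variable R : realType.
Local Notation M := ('M[R]_2).

Ltac unf3 := unfold deph, psi, psibar, phi, phibar, bloch, pauliX, pauliZ, ketbra, lf, o1;
  rewrite ?summxE ?mxE /= ?big_ord_recl ?big_ord0 ?mxE /= ?mulr1n ?mulr0n.

Lemma tr_db (r x z x' z' : R) :
  \tr (deph r (bloch x z) *m bloch x' z') = (1 + (1 - r) * x * x' + z * z') / 2.
Proof. rewrite trE; unf3; by field. Qed.
Lemma tr_k0 (r x z : R) : \tr (deph r (ketbra R 0) *m bloch x z) = (1 + z) / 2.
Proof. rewrite trE; unf3; by field. Qed.
Lemma tr_k1 (r x z : R) : \tr (deph r (ketbra R 1) *m bloch x z) = (1 - z) / 2.
Proof. rewrite trE; unf3; by field. Qed.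

Lemma perl (a b g h m1 m2 m3 m4 : R) : 0 <= a <= 1 -> 0 <= b <= 1 -> 0 <= g <= 1 -> 0 <= h <= 1 ->
  0 <= m1 -> 0 <= m2 -> 0 <= m3 -> 0 <= m4 -> m1 + m2 = m3 + m4 ->
  (a - b) * (m1 - m4) + (g - h) * (m1 - m3) <= m1 + m2.
Proof. move=> ha hb hg hh h1 h2 h3 h4 he.
have hab : (a - b) * (m1 - m4) <= `|m1 - m4|.
  case: (lerP 0 (m1 - m4)) => hx; [rewrite ger0_norm //; nra | rewrite ltr0_norm //; nra].
have hgh : (g - h) * (m1 - m3) <= `|m1 - m3|.
  case: (lerP 0 (m1 - m3)) => hx; [rewrite ger0_norm //; nra | rewrite ltr0_norm //; nra].
case: (lerP 0 (m1 - m4)) => hx; [rewrite ger0_norm // in hab | rewrite ltr0_norm // in hab];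
case: (lerP 0 (m1 - m3)) => hy; [rewrite ger0_norm // in hgh | rewrite ltr0_norm // in hgh| rewrite ger0_norm // in hgh | rewrite ltr0_norm // in hgh]; lra.
Qed.

Lemma lower (t r : R) : admits_NC t r -> (1 - r) * sin t ^+ 2 + cos t <= 1.
Proof.
move=> [n [mu [xi [hmu [hcl [hxi [_ [_ hrep]]]]]]]].
have hP1 : in_hull (states t) (psi t) := in_hull_nth (s := states t) (j := 0) isT.
have hP2 : in_hull (states t) (psibar t) := in_hull_nth (s := states t) (j := 1) isT.
have hP3 : in_hull (states t) (phi t) := in_hull_nth (s := states t) (j := 2) isT.
have hP4 : in_hull (states t) (phibar t) := in_hull_nth (s := states t) (j := 3) isT.
pose EE := [:: 0, 1%:M & effects t r].
have hE1 : in_hull EE (deph r (psi t)) := in_hull_nth (s := EE) (j := 2) isT.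
have hE4 : in_hull EE (deph r (phibar t)) := in_hull_nth (s := EE) (j := 5) isT.
have hG0 : in_hull EE (deph r (ketbra R 0)) := in_hull_nth (s := EE) (j := 6) isT.
have hG1 : in_hull EE (deph r (ketbra R 1)) := in_hull_nth (s := EE) (j := 7) isT.
have m1 : psi t \in states t by rewrite !inE eqxx.
have m3 : phi t \in states t by rewrite !inE eqxx !orbT.
have m4 : phibar t \in states t by rewrite !inE eqxx !orbT.
have mE1 : deph r (psi t) \in effects t r by rewrite /effects /= !inE eqxx.
have mE4 : deph r (phibar t) \in effects t r by rewrite /effects /= !inE eqxx !orbT.
have mG0 : deph r (ketbra R 0) \in effects t r by rewrite /effects /= !inE eqxx !orbT.
have mG1 : deph r (ketbra R 1) \in effects t r by rewrite /effects /= !inE eqxx !orbT.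
have hmix l : mu (psi t) l + mu (psibar t) l = mu (phi t) l + mu (phibar t) l.
  have e : 2^-1 *: psi t + (1 - 2^-1) *: psibar t = 2^-1 *: phi t + (1 - 2^-1) *: phibar t.
    apply/matrixP => i j; rewrite !mxE.
    by case: i => [[|[|//]] ?]; case: j => [[|[|//]] ?]; unf3; field.
  have h01 : 0 <= (2^-1 : R) <= 1 by apply/andP; split; lra.
  have h12 := hcl _ _ _ hP1 hP2 h01 l; have h34 := hcl _ _ _ hP3 hP4 h01 l.
  rewrite e h34 in h12; lra.
have key : \sum_l ((xi (deph r (psi t)) l - xi (deph r (phibar t)) l) * (mu (psi t) l - mu (phibar t) l)
   + (xi (deph r (ketbra R 0)) l - xi (deph r (ketbra R 1)) l) * (mu (psi t) l - mu (phi t) l))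
   = 2 * ((1 - r) * sin t ^+ 2) + 2 * cos t.
  rewrite (eq_bigr (fun l =>
     (xi (deph r (psi t)) l * mu (psi t) l - xi (deph r (psi t)) l * mu (phibar t) l
      - xi (deph r (phibar t)) l * mu (psi t) l + xi (deph r (phibar t)) l * mu (phibar t) l)
     + (xi (deph r (ketbra R 0)) l * mu (psi t) l - xi (deph r (ketbra R 0)) l * mu (phi t) l
      - xi (deph r (ketbra R 1)) l * mu (psi t) l + xi (deph r (ketbra R 1)) l * mu (phi t) l)));
    last by move=> l _; ring.
  rewrite !big_split /= !sumrN.
  rewrite -(hrep _ _ m1 mE1) -(hrep _ _ m4 mE1) -(hrep _ _ m1 mE4) -(hrep _ _ m4 mE4).
  rewrite -(hrep _ _ m1 mG0) -(hrep _ _ m3 mG0) -(hrep _ _ m1 mG1) -(hrep _ _ m3 mG1).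
  rewrite /psi /phi /phibar !tr_db !tr_k0 !tr_k1; by field.
have bound : \sum_l ((xi (deph r (psi t)) l - xi (deph r (phibar t)) l) * (mu (psi t) l - mu (phibar t) l)
   + (xi (deph r (ketbra R 0)) l - xi (deph r (ketbra R 1)) l) * (mu (psi t) l - mu (phi t) l))
   <= \sum_l (mu (psi t) l + mu (psibar t) l).
  apply: ler_sum => l _; apply: perl; try exact: hxi; try exact: hmix;
  [exact: (hmu _ hP1).1 | exact: (hmu _ hP2).1 | exact: (hmu _ hP3).1 | exact: (hmu _ hP4).1].
rewrite key big_split /= (hmu _ hP1).2 (hmu _ hP2).2 in bound.
lra.
Qed.

End Lower.

Theorem mainTheorem2 (R : realType) (t : R) (ht : 0 < t < pi / 2) :
  let rmin := 1 - (1 - cos t) / (sin t ^+ 2) in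
  (0 <= rmin <= 1) /\ admits_NC t rmin /\
  (forall r : R, 0 <= r <= 1 -> admits_NC t r -> rmin <= r).
Proof.
move=> rmin.
have hs : 0 < sin t := sin_gt0_pihalf ht.
have hc : 0 < cos t.
  apply: cos_gt0_pihalf; move/andP: ht => [h1 h2]; apply/andP; split; lra.
have h2 := sin2cos2 t.
have hs2 : 0 < sin t ^+ 2 by rewrite expr2 mulr_gt0.
have hc1 : cos t < 1.
  have : cos t ^+ 2 < 1 by lra.
  rewrite expr2 => ?; nra.
rewrite /rmin; set k := (1 - cos t) / sin t ^+ 2.
have hks : k * sin t ^+ 2 = 1 - cos t by rewrite /k divfK // gt_eqF.
have hk : 0 < k by rewrite /k divr_gt0 // subr_gt0.
have hk1 : k <= 1.
  have : k * sin t ^+ 2 <= 1 * sin t ^+ 2.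
    rewrite hks mul1r h2 expr2; nra.
  by rewrite ler_pM2r.
split; first by apply/andP; split; lra.
split.
  apply: (@model R t k ((k * sin t)^-1)) => //; first by apply/andP; split; lra.
  by rewrite mulVf // mulf_neq0 // gt_eqF.
move=> r hr hNC.
have := lower hNC => hl.
have : (1 - r) * sin t ^+ 2 <= k * sin t ^+ 2 by lra.
rewrite ler_pM2r // => ?; lra.
Qed.
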